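(* Let $F:\mathbb{R}^n\rightrightarrows\mathbb{R}^p$ and $G:\mathbb{R}^p\rightrightarrows\mathbb{R}^q$ be nearly convex set-valued mappings with $\operatorname{ri}(\operatorname{rge} F)\cap\operatorname{ri}(\operatorname{dom} G)\neq\emptyset$. Define $M_0(x,z)=\operatorname{ri} F(x)\cap\operatorname{ri} G^{-1}(z)$ for $(x,z)\in\mathbb{R}^n\times\mathbb{R}^q$ and $\operatorname{dom} M_0=\{(x,z):M_0(x,z)\neq\emptyset\}$. Then $$\operatorname{ri}\big(\operatorname{gph}(G\circ F)\big)=\big[\operatorname{ri}(\operatorname{dom} F)\times\operatorname{ri}(\operatorname{rge} G)\big]\cap\operatorname{dom} M_0.$$
   Context: A set $\Omega\subset\mathbb{R}^k$ is nearly convex if there is a convex set $C$ with $C\subset\Omega\subset\overline{C}$. For an arbitrary set $\Omega$, $\operatorname{ri}\Omega=\{a\in\Omega:\exists\delta>0,\ B(a;\delta)\cap\operatorname{aff}\Omega\subset\Omega\}$. For a set-valued mapping $F$: $\operatorname{dom} F=\{x:F(x)\neq\emptyset\}$, $\operatorname{rge} F=\bigcup_x F(x)$, $\operatorname{gph} F=\{(x,y):y\in F(x)\}$; $F$ is nearly convex if $\operatorname{gph} F$ is nearly convex. $G^{-1}(z)=\{y: z\in G(y)\}$, and $(G\circ F)(x)=\bigcup_{y\in F(x)}G(y)$. *)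

(* Defs.v *)
From HB Require Import structures.
From mathcomp Require Import all_boot all_order all_algebra.
From mathcomp Require Import boolp classical_sets reals.
Set Implicit Arguments. Unset Strict Implicit. Unset Printing Implicit Defensive.
Import Order.TTheory GRing.Theory Num.Theory.
Local Open Scope ring_scope.
Local Open Scope classical_set_scope.

(* R^k is represented by row vectors 'rV[R]_k; R^n x R^m is identified with
   R^(n+m) via row_mx. *)

Section Defs.
Variable R : realType.

Definition sqdist (k : nat) (x y : 'rV[R]_k) : R :=
  \sum_(i < k) (x ord0 i - y ord0 i) ^+ 2.

Definition eball (k : nat) (a : 'rV[R]_k) (d : R) : set 'rV[R]_k :=
  [set x | sqdist x a < d ^+ 2].

Definition convex_set_R (k : nat) (C : set 'rV[R]_k) : Prop :=
  forall x y (t : R), C x -> C y -> 0 <= t -> t <= 1 ->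
    C (t *: x + (1 - t) *: y).

Definition eclosure (k : nat) (C : set 'rV[R]_k) : set 'rV[R]_k :=
  [set x | forall e : R, 0 < e -> exists y, C y /\ eball x e y].

Definition nearly_convex (k : nat) (O : set 'rV[R]_k) : Prop :=
  exists C : set 'rV[R]_k, convex_set_R C /\ C `<=` O /\ O `<=` eclosure C.

Definition aff (k : nat) (O : set 'rV[R]_k) : set 'rV[R]_k :=
  [set x | exists (m : nat) (l : 'I_m -> R) (P : 'I_m -> 'rV[R]_k),
     (forall i, O (P i)) /\ \sum_(i < m) l i = 1 /\
     x = \sum_(i < m) l i *: P i].

Definition ri (k : nat) (O : set 'rV[R]_k) : set 'rV[R]_k :=
  [set a | O a /\ exists d : R, 0 < d /\ eball a d `&` aff O `<=` O].

Definition dom (n p : nat) (F : 'rV[R]_n -> set 'rV[R]_p) : set 'rV[R]_n :=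
  [set x | F x !=set0].
Definition rge (n p : nat) (F : 'rV[R]_n -> set 'rV[R]_p) : set 'rV[R]_p :=
  [set y | exists x, F x y].
Definition gph (n p : nat) (F : 'rV[R]_n -> set 'rV[R]_p) : set 'rV[R]_(n + p) :=
  [set v | exists x y, F x y /\ v = row_mx x y].
Definition nearly_convex_map (n p : nat) (F : 'rV[R]_n -> set 'rV[R]_p) : Prop :=
  nearly_convex (gph F).
Definition inv_map (p q : nat) (G : 'rV[R]_p -> set 'rV[R]_q) : 'rV[R]_q -> set 'rV[R]_p :=
  fun z => [set y | G y z].
Definition comp_map (n p q : nat) (G : 'rV[R]_p -> set 'rV[R]_q)
  (F : 'rV[R]_n -> set 'rV[R]_p) : 'rV[R]_n -> set 'rV[R]_q :=
  fun x => [set z | exists y, F x y /\ G y z].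

Definition M0 (n p q : nat) (F : 'rV[R]_n -> set 'rV[R]_p)
  (G : 'rV[R]_p -> set 'rV[R]_q) (x : 'rV[R]_n) (z : 'rV[R]_q) : set 'rV[R]_p :=
  ri (F x) `&` ri (inv_map G z).
Definition domM0 (n p q : nat) (F : 'rV[R]_n -> set 'rV[R]_p)
  (G : 'rV[R]_p -> set 'rV[R]_q) : set 'rV[R]_(n + q) :=
  [set v | exists x z, M0 F G x z !=set0 /\ v = row_mx x z].
End Defs.

(* Main.v *)
Require Import Defs.
From HB Require Import structures.
From mathcomp Require Import all_boot all_order all_algebra.
From mathcomp Require Import boolp classical_sets reals.
From mathcomp Require Import ring lra.
Import Order.TTheory GRing.Theory Num.Theory.
Set Implicit Arguments. Unset Strict Implicit. Unset Printing Implicit Defensive.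
Local Open Scope ring_scope.
Local Open Scope classical_set_scope.

Definition nrm2 (R : realType) k (v : 'rV[R]_k) : R := \sum_(i < k) (v ord0 i) ^+ 2.

Lemma sqdistE (R : realType) k (x y : 'rV[R]_k) : sqdist x y = nrm2 (x - y).
Proof. by apply: eq_bigr => i _; rewrite !mxE. Qed.

Lemma nrm2_ge0 (R : realType) k (v : 'rV[R]_k) : 0 <= nrm2 v.
Proof. by apply: sumr_ge0 => i _; rewrite sqr_ge0. Qed.

Lemma nrm2Z (R : realType) k (a : R) (v : 'rV[R]_k) : nrm2 (a *: v) = a ^+ 2 * nrm2 v.
Proof. rewrite /nrm2 mulr_sumr; apply: eq_bigr => i _; rewrite !mxE; ring. Qed.

Lemma nrm2D (R : realType) k (x y : 'rV[R]_k) : nrm2 (x + y) <= 2 * nrm2 x + 2 * nrm2 y.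
Proof.
rewrite /nrm2 !mulr_sumr -big_split /=; apply: ler_sum => i _; rewrite !mxE.
have := sqr_ge0 (x ord0 i - y ord0 i); nra.
Qed.

Lemma nrm2N (R : realType) k (x y : 'rV[R]_k) : nrm2 (x - y) = nrm2 (y - x).
Proof. by apply: eq_bigr => i _; rewrite !mxE; ring. Qed.

Lemma coord_le (R : realType) k (v : 'rV[R]_k) i : (v ord0 i) ^+ 2 <= nrm2 v.
Proof.
rewrite /nrm2 (bigD1 i) //= lerDl; apply: sumr_ge0 => j _; exact: sqr_ge0.
Qed.

Lemma abs_lt_sq (R : realType) (a e : R) : 0 < e -> a ^+ 2 < e ^+ 2 -> `|a| < e.
Proof.
move=> e0 h; case: (leP e `|a|) => [he|//]; exfalso.
have := real_normK (num_real a); have := normr_ge0 a; nra.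
Qed.

Lemma coord_lt (R : realType) k (v : 'rV[R]_k) (e : R) i :
  0 < e -> nrm2 v < e ^+ 2 -> `|v ord0 i| < e.
Proof. move=> e0 h; apply: abs_lt_sq => //; exact: le_lt_trans (coord_le v i) h. Qed.

Lemma nrm2_row_mx (R : realType) n p (x : 'rV[R]_n) (y : 'rV[R]_p) :
  nrm2 (row_mx x y) = nrm2 x + nrm2 y.
Proof. by rewrite /nrm2 big_split_ord /=; congr (_ + _); apply: eq_bigr => i _;
  rewrite ?row_mxEl ?row_mxEr. Qed.

Lemma nrm2_lsub (R : realType) n p (w : 'rV[R]_(n + p)) : nrm2 (lsubmx w) <= nrm2 w.
Proof. rewrite -{2}(hsubmxK w) nrm2_row_mx lerDl; exact: nrm2_ge0. Qed.
Lemma nrm2_rsub (R : realType) n p (w : 'rV[R]_(n + p)) : nrm2 (rsubmx w) <= nrm2 w.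
Proof. rewrite -{2}(hsubmxK w) nrm2_row_mx lerDr; exact: nrm2_ge0. Qed.

Lemma mulmx_bound (R : realType) k m (v : 'rV[R]_k) (K : 'M[R]_(k, m)) (d : R) j :
  (forall i, `|v ord0 i| <= d) -> `|(v *m K) ord0 j| <= d * \sum_i `|K i j|.
Proof.
move=> hv; rewrite !mxE mulr_sumr; apply: le_trans (ler_norm_sum _ _ _) _.
apply: ler_sum => i _; rewrite normrM ler_wpM2r //.
Qed.

Lemma small_eps (R : realType) (N d : R) : 0 <= N -> 0 < d ->
  exists e : R, 0 < e /\ e < 1 /\ e ^+ 2 * N < d ^+ 2.
Proof.
move=> N0 d0; have d20 : 0 < d ^+ 2 by rewrite exprn_gt0.
exists (d ^+ 2 / (1 + d ^+ 2 + N)).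
have h0 : 0 < 1 + d ^+ 2 + N by lra.
split; first by rewrite divr_gt0.
split; first by rewrite ltr_pdivrMr //; lra.
set e := d ^+ 2 / _.
have e0 : 0 < e by rewrite divr_gt0.
have e1 : e < 1 by rewrite ltr_pdivrMr //; lra.
have eN : e * N < d ^+ 2.
  rewrite /e mulrAC ltr_pdivrMr //; nra.
nra.
Qed.

Lemma gt0_neq0 (R : realType) (x : R) : 0 < x -> x != 0.
Proof. by move=> h; rewrite gt_eqF. Qed.

Definition pro (R : realType) k (C : set 'rV[R]_k) : set 'rV[R]_k :=
  [set a | C a /\ forall b, C b -> exists e : R, 0 < e /\ C (a + e *: (a - b))].

Definition affm (R : realType) k l (f : 'rV[R]_k -> 'rV[R]_l) :=
  forall (t : R) x y, f (t *: x + (1 - t) *: y) = t *: f x + (1 - t) *: f y.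

Lemma affm_step (R : realType) k l (f : 'rV[R]_k -> 'rV[R]_l) x y (e : R) :
  affm f -> f (x + e *: (x - y)) = f x + e *: (f x - f y).
Proof.
move=> hf.
have -> : x + e *: (x - y) = (1 + e) *: x + (1 - (1 + e)) *: y.
  by apply/rowP => j; rewrite !mxE; ring.
rewrite hf; apply/rowP => j; rewrite !mxE; ring.
Qed.

Lemma LSpro (R : realType) k (C : set 'rV[R]_k) c a (t : R) :
  convex_set_R C -> pro C c -> C a -> 0 <= t -> t < 1 ->
  pro C (t *: a + (1 - t) *: c).
Proof.
move=> cvx [Cc hc] Ca t0 t1; split; first by apply: cvx => //; exact: ltW.
move=> b Cb; have [e [e0 Ce]] := hc b Cb.
have h0 : 0 < 1 + e * t by nra.
exists (e * (1 - t) / (1 + e * t)); split.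
  by rewrite divr_gt0 // mulr_gt0 // subr_gt0.
have -> : t *: a + (1 - t) *: c + e * (1 - t) / (1 + e * t) *: (t *: a + (1 - t) *: c - b)
   = ((1 - t) / (1 + e * t)) *: (c + e *: (c - b)) + (1 - (1 - t) / (1 + e * t)) *: a.
  apply/rowP => j; rewrite !mxE; field; exact: gt0_neq0.
apply: cvx => //; first by rewrite divr_ge0 //; lra.
rewrite ler_pdivrMr //; nra.
Qed.

Lemma pro_sub (R : realType) k (C : set 'rV[R]_k) : pro C `<=` C.
Proof. by move=> a []. Qed.

Lemma convex_image (R : realType) k l (C : set 'rV[R]_k) (f : 'rV[R]_k -> 'rV[R]_l) :
  convex_set_R C -> affm f -> convex_set_R (f @` C).
Proof.
move=> cvx hf _ _ t [x Cx <-] [y Cy <-] t0 t1.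
by exists (t *: x + (1 - t) *: y); [exact: cvx | exact: hf].
Qed.

Lemma pro_image (R : realType) k l (C : set 'rV[R]_k) (f : 'rV[R]_k -> 'rV[R]_l) :
  affm f -> f @` pro C `<=` pro (f @` C).
Proof.
move=> hf _ [a [Ca ha] <-]; split; first by exists a.
move=> _ [b Cb <-]; have [e [e0 Ce]] := ha b Cb.
by exists e; split => //; exists (a + e *: (a - b)) => //; rewrite affm_step.
Qed.

Lemma pro_image2 (R : realType) k l (C : set 'rV[R]_k) (f : 'rV[R]_k -> 'rV[R]_l) c :
  convex_set_R C -> affm f -> pro C c -> pro (f @` C) `<=` f @` pro C.
Proof.
move=> cvx hf pc u [_ hu].
have [e [e0 [a' Ca' ha']]] := hu (f c) (ex_intro2 _ _ c (pro_sub pc) erefl).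
have h1 : 0 < 1 + e by lra.
have t0 : 0 <= (1 + e)^-1 by rewrite invr_ge0 ltW.
have t1 : (1 + e)^-1 < 1 by rewrite invf_lt1 //; lra.
exists ((1 + e)^-1 *: a' + (1 - (1 + e)^-1) *: c); first exact: LSpro.
rewrite hf ha'; apply/rowP => j; rewrite !mxE; field; exact: gt0_neq0.
Qed.

Lemma convex_pre (R : realType) k l (C : set 'rV[R]_l) (f : 'rV[R]_k -> 'rV[R]_l) :
  convex_set_R C -> affm f -> convex_set_R (f @^-1` C).
Proof. by move=> cvx hf x y t Cx Cy t0 t1; rewrite /preimage /= hf; apply: cvx. Qed.

Lemma pro_pre (R : realType) k l (C : set 'rV[R]_l) (f : 'rV[R]_k -> 'rV[R]_l) :
  affm f -> (forall b, exists w, f w = b) -> pro (f @^-1` C) = f @^-1` pro C.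
Proof.
move=> hf sf; apply/seteqP; split => w [Cw hw]; split => //.
  move=> b Cb; have [w' fw'] := sf b.
  have Cw' : (f @^-1` C) w' by rewrite /preimage /= fw'.
  have [e [e0 Ce]] := hw w' Cw'.
  by exists e; split => //; move: Ce; rewrite /preimage /= affm_step // fw'.
move=> w' Cw'; have [e [e0 Ce]] := hw (f w') Cw'.
by exists e; split => //; rewrite /preimage /= affm_step.
Qed.

Lemma pro_shrink (R : realType) k (C : set 'rV[R]_k) a b (e1 e : R) :
  convex_set_R C -> C a -> C (a + e1 *: (a - b)) -> 0 < e -> e <= e1 ->
  C (a + e *: (a - b)).
Proof.
move=> cvx Ca Ce1 e0 ee1.
have e10 : 0 < e1 by lra.
have -> : a + e *: (a - b) = (e / e1) *: (a + e1 *: (a - b)) + (1 - e / e1) *: a.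
  apply/rowP => j; rewrite !mxE; field; exact: gt0_neq0.
apply: cvx => //; first by rewrite divr_ge0 // ltW.
by rewrite ler_pdivrMr // mul1r.
Qed.

Lemma pro_inter (R : realType) k (C1 C2 : set 'rV[R]_k) :
  convex_set_R C1 -> convex_set_R C2 -> pro C1 `&` pro C2 `<=` pro (C1 `&` C2).
Proof.
move=> cv1 cv2 a [[C1a h1] [C2a h2]]; split => // b [C1b C2b].
have [e1 [e10 E1]] := h1 b C1b; have [e2 [e20 E2]] := h2 b C2b.
have s0 : 0 < e1 + e2 by lra.
exists (e1 * e2 / (e1 + e2)); have ee0 : 0 < e1 * e2 / (e1 + e2) by rewrite divr_gt0 // mulr_gt0.
split => //; split.
  apply: (pro_shrink cv1 C1a E1) => //; rewrite ler_pdivrMr //; nra.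
apply: (pro_shrink cv2 C2a E2) => //; rewrite ler_pdivrMr //; nra.
Qed.

Lemma pro_inter2 (R : realType) k (C1 C2 : set 'rV[R]_k) c :
  convex_set_R C1 -> pro C1 c -> C2 c -> pro (C1 `&` C2) `<=` pro C1.
Proof.
move=> cv1 pc C2c a [[C1a C2a] ha].
have [e [e0 [Ce _]]] := ha c (conj (pro_sub pc) C2c).
have h1 : 0 < 1 + e by lra.
have t0 : 0 <= (1 + e)^-1 by rewrite invr_ge0 ltW.
have t1 : (1 + e)^-1 < 1 by rewrite invf_lt1 //; lra.
have -> : a = (1 + e)^-1 *: (a + e *: (a - c)) + (1 - (1 + e)^-1) *: c.
  apply/rowP => j; rewrite !mxE; field; exact: gt0_neq0.
exact: LSpro.
Qed.

Lemma pro_fiber (R : realType) k l (C : set 'rV[R]_l) (g : 'rV[R]_k -> 'rV[R]_l) y0 y :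
  convex_set_R C -> affm g -> pro C (g y0) ->
  (pro (g @^-1` C) y <-> pro C (g y)).
Proof.
move=> cvx hg p0; split.
  move=> [Cy hy]; have [e [e0 Ce]] := hy y0 (pro_sub p0).
  have h1 : 0 < 1 + e by lra.
  have t0 : 0 <= (1 + e)^-1 by rewrite invr_ge0 ltW.
  have t1 : (1 + e)^-1 < 1 by rewrite invf_lt1 //; lra.
  have -> : y = (1 + e)^-1 *: (y + e *: (y - y0)) + (1 - (1 + e)^-1) *: y0.
    apply/rowP => j; rewrite !mxE; field; exact: gt0_neq0.
  rewrite hg; exact: LSpro.
move=> [Cy hy]; split => // b Cb; have [e [e0 Ce]] := hy (g b) Cb.
by exists e; split => //; rewrite /preimage /= affm_step.
Qed.
Lemma ecl_mono (R : realType) k (A B : set 'rV[R]_k) : A `<=` B -> eclosure A `<=` eclosure B.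
Proof. by move=> AB x hx e e0; have [y [Ay hy]] := hx e e0; exists y; split => //; exact: AB. Qed.

Lemma sqdist_refl (R : realType) k (x : 'rV[R]_k) : sqdist x x = 0.
Proof. by rewrite sqdistE subrr /nrm2 big1 // => i _; rewrite mxE expr0n. Qed.

Lemma sub_ecl (R : realType) k (A : set 'rV[R]_k) : A `<=` eclosure A.
Proof. by move=> x Ax e e0; exists x; split => //; rewrite /eball /= sqdist_refl exprn_gt0. Qed.

Lemma le_sum1 (R : realType) m (F : 'I_m -> R) i : (forall j, 0 <= F j) -> F i <= \sum_j F j.
Proof. by move=> h; rewrite (bigD1 i) //= lerDl sumr_ge0. Qed.

Definition riS (R : realType) k (S X : set 'rV[R]_k) : set 'rV[R]_k :=
  [set a | X a /\ exists d : R, 0 < d /\ forall u, S u -> sqdist u a < d ^+ 2 -> X u].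

Definition affS (R : realType) k (S : set 'rV[R]_k) :=
  forall (t : R) x y, S x -> S y -> S (t *: x + (1 - t) *: y).

Lemma struct (R : realType) k (C : set 'rV[R]_k) c0 : C c0 ->
  exists m (W : 'M[R]_(m, k)), (forall i, C (c0 + row i W)) /\
    (forall c, C c -> (c - c0 <= W)%MS).
Proof.
move=> Cc0.
pose P r := `[< exists m (W : 'M[R]_(m,k)), (forall i, C (c0 + row i W)) /\ \rank W = r >].
have exP : exists r, P r.
  by exists 0%N; apply/asboolP; exists 0%N, 0; split; [case | rewrite mxrank0].
have ubP : forall r, P r -> (r <= k)%N.
  by move=> r /asboolP [m [W [_ <-]]]; exact: rank_leq_col.
case: (ex_maxnP exP ubP) => r /asboolP [m [W [hW hr]]] hmax.
exists m, W; split => // c Cc; apply: contraT => hc.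
have hlt : (\rank W < \rank (col_mx W (c - c0)))%N.
  have hs : (W <= col_mx W (c - c0))%MS by rewrite -addsmxE addsmxSl.
  by move: (mxrank_leqif_sup hs) => /leqifP; rewrite col_mx_sub submx_refl (negbTE hc).
have : P (\rank (col_mx W (c - c0))).
  apply/asboolP; exists (m + 1)%N, (col_mx W (c - c0)); split => // i.
  rewrite -(splitK i); case: (split i) => i' /=; first by rewrite rowKu.
  by rewrite rowKd row_id addrC subrK.
by move=> /hmax; rewrite -hr leqNgt hlt.
Qed.

Lemma S_closed (R : realType) k m (W : 'M[R]_(m, k)) c0 :
  eclosure [set x | (x - c0 <= W)%MS] `<=` [set x | (x - c0 <= W)%MS].
Proof.
move=> x hx; apply: contraT; rewrite submxE => hc.
set K := cokermx W in hc *; set v := (x - c0) *m K in hc.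
have [j hj] : exists j, v ord0 j != 0.
  apply/existsP; apply: contraTT hc => /existsPn h; rewrite negbK.
  apply/eqP/rowP => j; move: (h j); rewrite negbK => /eqP ->; by rewrite mxE.
set eta := `|v ord0 j|; have eta0 : 0 < eta by rewrite normr_gt0.
set M := 1 + \sum_i `|K i j|.
have M0 : 0 < M by rewrite ltr_pwDl // sumr_ge0.
have e0 : 0 < eta / M by rewrite divr_gt0.
have [y [Sy hy]] := hx _ e0.
move: Sy; rewrite /= submxE => /eqP Sy.
rewrite /eball /= sqdistE nrm2N in hy.
have hxy : (x - y) *m K = v.
  have -> : x - y = (x - c0) - (y - c0) by apply/rowP => i; rewrite !mxE; ring.
  by rewrite mulmxBl Sy subr0.
have hb := mulmx_bound K j (fun i => ltW (coord_lt i e0 hy)).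
rewrite hxy -/eta in hb.
have : eta / M * \sum_i `|K i j| < eta / M * M.
  by rewrite ltr_pM2l // /M ltrDr.
rewrite divfK ?gt0_neq0 //; lra.
Qed.

Lemma cvx_comb (R : realType) k (C : set 'rV[R]_k) c0 m (w : 'I_m -> 'rV[R]_k) (l : 'I_m -> R) :
  convex_set_R C -> C c0 -> (forall i, C (c0 + w i)) -> (forall i, 0 <= l i) ->
  \sum_i l i <= 1 -> C (c0 + \sum_i l i *: w i).
Proof.
move=> cvx Cc0; elim: m w l => [|m IH] w l hw hl hs; first by rewrite big_ord0 addr0.
rewrite big_ord_recr /=; rewrite big_ord_recr /= in hs.
set lm := l ord_max in hs *.
have hs0 : 0 <= \sum_(i < m) l (widen_ord (leqnSn m) i) by apply: sumr_ge0.
have [lm1|lm1] := eqVneq lm 1.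
  have h0 : forall i : 'I_m, l (widen_ord (leqnSn m) i) = 0.
    have hz : \sum_(i < m) l (widen_ord (leqnSn m) i) = 0 by lra.
    by move=> i; apply: (psumr_eq0P _ hz).
  rewrite big1 ?add0r; last by move=> i _; rewrite h0 scale0r.
  by rewrite lm1 scale1r.
have lm0 : 0 <= lm by apply: hl.
have lmlt : lm < 1 by rewrite lt_neqAle lm1 /=; lra.
have lm10 : 1 - lm != 0 by apply: gt0_neq0; lra.
pose l' i := l (widen_ord (leqnSn m) i) / (1 - lm).
have := IH (fun i => w (widen_ord (leqnSn m) i)) l' (fun i => hw _) _ _.
have hS : (1 - lm) *: \sum_i l' i *: w (widen_ord (leqnSn m) i) =
          \sum_(i < m) l (widen_ord (leqnSn m) i) *: w (widen_ord (leqnSn m) i).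
  rewrite scaler_sumr; apply: eq_bigr => i _; rewrite scalerA /l' mulrC divfK //.
move=> /(_ _ _) h.
have {}h : C (c0 + \sum_i l' i *: w (widen_ord (leqnSn m) i)).
  apply: h; first by move=> i; rewrite /l' divr_ge0 //; lra.
  rewrite -mulr_suml ler_pdivrMr; last lra.
  lra.
have -> : c0 + (\sum_(i < m) l (widen_ord (leqnSn m) i) *: w (widen_ord (leqnSn m) i) + lm *: w ord_max)
  = lm *: (c0 + w ord_max) + (1 - lm) *: (c0 + \sum_i l' i *: w (widen_ord (leqnSn m) i)).
  rewrite (scalerDr (1 - lm)) hS; apply/rowP => j; rewrite !mxE; ring.
by apply: cvx; [exact: hw | exact: h | exact: lm0 | exact: ltW].
Qed.

Lemma N_point (R : realType) k (C : set 'rV[R]_k) c0 m (W : 'M[R]_(m, k)) :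
  convex_set_R C -> C c0 -> (forall i, C (c0 + row i W)) ->
  exists a, riS [set x | (x - c0 <= W)%MS] C a.
Proof.
move=> cvx Cc0 hW.
set s : R := (m.+1)%:R^-1.
have s0 : 0 < s by rewrite invr_gt0 ltr0n.
have ms : m%:R * s < 1.
  by rewrite /s ltr_pdivrMr ?ltr0n // mul1r ltr_nat.
have hsum : forall (f : 'I_m -> R), \sum_i (s + f i) = m%:R * s + \sum_i f i.
  by move=> f; rewrite big_split /= sumr_const card_ord mulr_natl.
exists (c0 + \sum_i s *: row i W); split.
  apply: cvx_comb => // [i|]; first exact: ltW.
  by rewrite sumr_const card_ord -mulr_natl; apply: ltW.
set P := pinvmx W.
set M := 1 + \sum_i \sum_j `|P j i|.
have M0 : 0 < M by rewrite ltr_pwDl // sumr_ge0 // => i _; rewrite sumr_ge0.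
exists (s / M); split; first by rewrite divr_gt0.
move=> u Su hu; set a := c0 + _ in hu.
rewrite /= sqdistE in hu.
set v := u - a.
have hv : (v <= W)%MS.
  have -> : v = (u - c0) - \sum_i s *: row i W by rewrite /v /a opprD addrA.
  by rewrite addmx_sub // ?eqmx_opp summx_sub // => i _; rewrite scalemx_sub // row_sub.
set mu := v *m P.
have hvm : v = \sum_i mu ord0 i *: row i W by rewrite -mulmx_sum_row mulmxKpV.
have hvj : forall j, `|v ord0 j| <= s / M by move=> j; apply/ltW/coord_lt => //; rewrite divr_gt0.
have hmu : forall i, `|mu ord0 i| <= s / M * \sum_j `|P j i| by move=> i; exact: mulmx_bound.
have hS : \sum_i `|mu ord0 i| < s.
  apply: (@le_lt_trans _ _ (s / M * (M - 1))).
    have -> : M - 1 = \sum_i \sum_j `|P j i| by rewrite /M; ring.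
    rewrite mulr_sumr; apply: ler_sum => i _; exact: hmu.
  have -> : s / M * (M - 1) = s - s / M by field; exact: gt0_neq0.
  have : 0 < s / M by rewrite divr_gt0.
  lra.
have hmu1 : forall i, `|mu ord0 i| < s.
  move=> i; apply: le_lt_trans hS; rewrite (bigD1 i) //= lerDl.
  by apply: sumr_ge0 => j _; exact: normr_ge0.
have -> : u = c0 + \sum_i (s + mu ord0 i) *: row i W.
  have -> : \sum_i (s + mu ord0 i) *: row i W = \sum_i s *: row i W + \sum_i mu ord0 i *: row i W.
    by rewrite -big_split; apply: eq_bigr => i _; rewrite scalerDl.
  rewrite -hvm /v /a; apply/rowP => j; rewrite !mxE; ring.
apply: cvx_comb => // [i|].
  have := hmu1 i; have := ler_norm (- mu ord0 i); rewrite normrN; lra.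
rewrite hsum; have : \sum_i mu ord0 i <= \sum_i `|mu ord0 i|.
  by apply: ler_sum => i _; exact: ler_norm.
have : m%:R * s + s = 1.
  rewrite /s (_ : (m.+1)%:R = m%:R + 1 :> R); last by rewrite -addn1 natrD.
  have m0 : 0 <= m%:R :> R := ler0n _ _.
  field; apply: gt0_neq0; lra.
lra.
Qed.

Lemma LSc (R : realType) k (S X : set 'rV[R]_k) c b (t : R) :
  affS S -> convex_set_R X -> X `<=` S -> riS S X c -> eclosure X b -> S b ->
  0 <= t -> t < 1 -> riS S X (t *: b + (1 - t) *: c).
Proof.
move=> aS cvx XS [Xc [d [d0 hd]]] clb Sb t0 t1.
set w := t *: b + (1 - t) *: c.
set rho := (1 - t) * d / 2.
have r0 : 0 < rho by rewrite /rho divr_gt0 // mulr_gt0 // subr_gt0.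
have [b' [Xb' hb']] := clb _ r0.
rewrite /eball /= sqdistE nrm2N in hb'.
have t10 : 1 - t != 0 by apply: gt0_neq0; lra.
have key : forall u, S u -> sqdist u w < rho ^+ 2 -> X u.
  move=> u Su hu; rewrite sqdistE in hu.
  set al := (1 - t)^-1.
  set c3 := al *: u + (1 - al) *: b'.
  have Sc3 : S c3 := aS al u b' Su (XS _ Xb').
  have hc3 : sqdist c3 c < d ^+ 2.
    rewrite sqdistE.
    have -> : c3 - c = al *: (u - w) + (al * t) *: (b - b').
      by apply/rowP => j; rewrite !mxE /al; field.
    apply: le_lt_trans (nrm2D _ _) _; rewrite !nrm2Z.
    have A0 : 0 < al ^+ 2 by rewrite exprn_gt0 // invr_gt0; lra.
    have hA : al ^+ 2 * rho ^+ 2 = d ^+ 2 / 4 by rewrite /al /rho; field.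
    have N2 := nrm2_ge0 (b - b').
    have h1 : al ^+ 2 * nrm2 (u - w) < al ^+ 2 * rho ^+ 2 by rewrite ltr_pM2l.
    have h2 : al ^+ 2 * nrm2 (b - b') < al ^+ 2 * rho ^+ 2 by rewrite ltr_pM2l.
    have h3 : (al * t) ^+ 2 * nrm2 (b - b') <= al ^+ 2 * nrm2 (b - b').
      rewrite exprMn -mulrA; apply: ler_wpM2l; first exact: ltW.
      have : t ^+ 2 <= 1 by nra.
      nra.
    lra.
  have Xc3 := hd c3 Sc3 hc3.
  have -> : u = t *: b' + (1 - t) *: c3.
    by apply/rowP => j; rewrite !mxE /al; field.
  by apply: cvx => //; exact: ltW.
split; first apply: key.
- exact: aS Sb (XS _ Xc).
- by rewrite sqdist_refl exprn_gt0.
by exists rho; split.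
Qed.

Lemma aff2 (R : realType) k (O : set 'rV[R]_k) x y (t : R) :
  O x -> O y -> aff O (t *: x + (1 - t) *: y).
Proof.
move=> Ox Oy; exists 2%N, (fun i : 'I_2 => if val i == 0%N then t else 1 - t),
  (fun i : 'I_2 => if val i == 0%N then x else y).
split; first by move=> i; case: (val i == 0%N).
by rewrite !big_ord_recl !big_ord0 /=; split; [ring | rewrite addr0].
Qed.

Lemma affS_sub (R : realType) k m (W : 'M[R]_(m, k)) c0 :
  affS [set x | (x - c0 <= W)%MS].
Proof.
move=> t x y /= hx hy.
have -> : t *: x + (1 - t) *: y - c0 = t *: (x - c0) + (1 - t) *: (y - c0).
  by apply/rowP => j; rewrite !mxE; ring.
by rewrite addmx_sub // scalemx_sub.
Qed.

Lemma aff_sub (R : realType) k m (W : 'M[R]_(m, k)) c0 (O : set 'rV[R]_k) :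
  O `<=` [set x | (x - c0 <= W)%MS] -> aff O `<=` [set x | (x - c0 <= W)%MS].
Proof.
move=> OS x [n [l [P [hP [hl ->]]]]] /=.
have E : \sum_(i < n) l i *: (P i - c0) = \sum_(i < n) l i *: P i - c0.
  rewrite (eq_bigr (fun i => l i *: P i - l i *: c0)); last by move=> i _; rewrite scalerBr.
  by rewrite sumrB -scaler_suml hl scale1r.
rewrite -E.
by apply: summx_sub => i _; apply: scalemx_sub; apply: OS.
Qed.

Lemma struct_all (R : realType) k (C : set 'rV[R]_k) c0 : convex_set_R C -> C c0 ->
  exists S : set 'rV[R]_k, [/\ affS S, C `<=` S, eclosure S `<=` S,
     (forall O, O `<=` S -> aff O `<=` S) & (exists a, riS S C a) /\ pro C = riS S C].
Proof.
move=> cvx Cc0; have [m [W [hW hC]]] := struct Cc0.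
have [as0 has0] := N_point cvx Cc0 hW.
set S := [set x | (x - c0 <= W)%MS].
have aS : affS S by apply: affS_sub.
have CS : C `<=` S by move=> c Cc; apply: hC.
exists S; split => //; first exact: S_closed.
  by move=> O; apply: aff_sub.
split; first by exists as0.
apply/seteqP; split => a.
- move=> [Ca ha]; have [e [e0 Ce]] := ha as0 (proj1 has0).
  have h1 : 0 < 1 + e by lra.
  have t0 : 0 <= (1 + e)^-1 by rewrite invr_ge0 ltW.
  have t1 : (1 + e)^-1 < 1 by rewrite invf_lt1 //; lra.
  have -> : a = (1 + e)^-1 *: (a + e *: (a - as0)) + (1 - (1 + e)^-1) *: as0.
    apply/rowP => j; rewrite !mxE; field; exact: gt0_neq0.
  apply: LSc => //; [exact: sub_ecl | exact: CS].
- move=> [Ca [d [d0 hd]]]; split => // b Cb.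
  have [e [e0 [e1 he]]] := small_eps (nrm2_ge0 (a - b)) d0.
  exists e; split => //; apply: hd.
    have -> : a + e *: (a - b) = (1 + e) *: a + (1 - (1 + e)) *: b.
      by apply/rowP => j; rewrite !mxE; ring.
    by apply: aS; apply: CS.
  by rewrite sqdistE addrAC subrr add0r nrm2Z.
Qed.

Lemma RIP (R : realType) k (C O : set 'rV[R]_k) :
  convex_set_R C -> C `<=` O -> O `<=` eclosure C -> ri O = pro C.
Proof.
move=> cvx CO OC.
have [[c0 Cc0]|C0] := pselect (C !=set0); last first.
  apply/seteqP; split => a ha; exfalso.
    have [y [Cy _]] := OC a (proj1 ha) 1 ltr01; apply: C0; by exists y.
  by apply: C0; exists a; exact: (proj1 ha).
have [S [aS CS clS affS' [[as0 has0] proE]]] := struct_all cvx Cc0.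
have OS : O `<=` S by move=> x /OC hx; apply: clS; exact: ecl_mono hx.
rewrite proE; apply/seteqP; split => a.
- move=> [Oa [d [d0 hd]]].
  have [e [e0 [e1 he]]] := small_eps (nrm2_ge0 (a - as0)) d0.
  set b := a + e *: (a - as0).
  have Ob : O b.
    apply: hd; split.
      by rewrite /eball /= /b sqdistE addrAC subrr add0r nrm2Z.
    have -> : b = (1 + e) *: a + (1 - (1 + e)) *: as0.
      by apply/rowP => j; rewrite !mxE; ring.
    by apply: aff2 => //; apply: CO; exact: (proj1 has0).
  have h1 : 0 < 1 + e by lra.
  have t0 : 0 <= (1 + e)^-1 by rewrite invr_ge0 ltW.
  have t1 : (1 + e)^-1 < 1 by rewrite invf_lt1 //; lra.
  have -> : a = (1 + e)^-1 *: b + (1 - (1 + e)^-1) *: as0.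
    apply/rowP => j; rewrite !mxE; field; exact: gt0_neq0.
  by apply: LSc => //; [exact: OC | exact: OS].
- move=> [Ca [d [d0 hd]]]; split; first exact: CO.
  exists d; split => // u [hu /(affS' _ OS) Su]; apply: CO; exact: hd.
Qed.

Lemma LSC2 (R : realType) k (C : set 'rV[R]_k) c b (t : R) :
  convex_set_R C -> pro C c -> eclosure C b -> 0 <= t -> t < 1 -> C (t *: b + (1 - t) *: c).
Proof.
move=> cvx pc clb t0 t1.
have [S [aS CS clS _ [_ proE]]] := struct_all cvx (pro_sub pc).
rewrite proE in pc.
have := LSc aS cvx CS pc clb (clS _ (ecl_mono CS clb)) t0 t1.
by case.
Qed.

Lemma pro_nonempty (R : realType) k (C : set 'rV[R]_k) c :
  convex_set_R C -> C c -> exists a, pro C a.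
Proof.
move=> cvx Cc; have [S [_ _ _ _ [[a ha] proE]]] := struct_all cvx Cc.
by exists a; rewrite proE.
Qed.

Lemma sq_comb (R : realType) k (b c : 'rV[R]_k) (t : R) :
  sqdist (t *: b + (1 - t) *: c) b = (1 - t) ^+ 2 * nrm2 (c - b).
Proof.
rewrite sqdistE -nrm2Z; congr nrm2; apply/rowP => j; rewrite !mxE; ring.
Qed.

Lemma ecl_image (R : realType) k l (C : set 'rV[R]_k) (f : 'rV[R]_k -> 'rV[R]_l) :
  (forall x y, sqdist (f x) (f y) <= sqdist x y) ->
  f @` eclosure C `<=` eclosure (f @` C).
Proof.
move=> hf _ [x hx <-] e e0; have [y [Cy hy]] := hx e e0.
exists (f y); split; first by exists y.
exact: le_lt_trans (hf _ _) hy.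
Qed.

Lemma ri_image (R : realType) k l (C O : set 'rV[R]_k) (f : 'rV[R]_k -> 'rV[R]_l) :
  convex_set_R C -> C `<=` O -> O `<=` eclosure C -> affm f ->
  (forall x y, sqdist (f x) (f y) <= sqdist x y) ->
  ri (f @` O) = f @` pro C.
Proof.
move=> cvx CO OC hf hc.
suff -> : ri (f @` O) = pro (f @` C).
  apply/seteqP; split; last exact: pro_image.
  move=> u hu; have [[c Cc _] _] := hu.
  have [a pa] := pro_nonempty cvx Cc.
  exact: (pro_image2 cvx hf pa hu).
apply: RIP; first exact: convex_image.
  by move=> _ [x Cx <-]; exists x => //; apply: CO.
move=> _ [x Ox <-]; apply: ecl_image => //; exists x => //; exact: OC.
Qed.

Lemma ri_fiber (R : realType) k l (C O : set 'rV[R]_l) (g : 'rV[R]_k -> 'rV[R]_l) y0 y :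
  convex_set_R C -> C `<=` O -> O `<=` eclosure C -> affm g -> pro C (g y0) ->
  (ri (g @^-1` O) y <-> pro C (g y)).
Proof.
move=> cvx CO OC hg p0.
have E : ri (g @^-1` O) = pro (g @^-1` C).
  apply: RIP; first exact: convex_pre.
    by move=> x; apply: CO.
  move=> x /OC hx e e0.
  have [eps [ep0 [ep1 he]]] := small_eps (nrm2_ge0 (y0 - x)) e0.
  exists ((1 - eps) *: x + (1 - (1 - eps)) *: y0); split.
    by rewrite /preimage /= hg; apply: LSC2 => //; lra.
  by rewrite /eball /= sq_comb (_ : 1 - (1 - eps) = eps) //; ring.
rewrite E; exact: (@pro_fiber _ _ _ C g y0 y cvx hg p0).
Qed.

Lemma lsub_lin (R : realType) n p (a b : R) (x y : 'rV[R]_(n + p)) :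
  lsubmx (a *: x + b *: y) = a *: lsubmx x + b *: lsubmx y.
Proof. by apply/rowP => j; rewrite !mxE. Qed.
Lemma rsub_lin (R : realType) n p (a b : R) (x y : 'rV[R]_(n + p)) :
  rsubmx (a *: x + b *: y) = a *: rsubmx x + b *: rsubmx y.
Proof. by apply/rowP => j; rewrite !mxE. Qed.

Lemma affm_lsub (R : realType) n p : affm (@lsubmx R 1 n p).
Proof. by move=> t x y; rewrite lsub_lin. Qed.
Lemma affm_rsub (R : realType) n p : affm (@rsubmx R 1 n p).
Proof. by move=> t x y; rewrite rsub_lin. Qed.

Lemma affm_rowl (R : realType) n p (x : 'rV[R]_n) : affm (fun y : 'rV[R]_p => row_mx x y).
Proof.
move=> t y y'; rewrite !scale_row_mx add_row_mx; congr row_mx.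
by apply/rowP => j; rewrite !mxE; ring.
Qed.
Lemma affm_rowr (R : realType) n p (z : 'rV[R]_p) : affm (fun y : 'rV[R]_n => row_mx y z).
Proof.
move=> t y y'; rewrite !scale_row_mx add_row_mx; congr row_mx.
by apply/rowP => j; rewrite !mxE; ring.
Qed.

Definition Lmap (R : realType) n p q (w : 'rV[R]_(n + p + q)) : 'rV[R]_(n + q) :=
  row_mx (lsubmx (lsubmx w)) (rsubmx w).
Definition Mmap (R : realType) n p q (w : 'rV[R]_(n + p + q)) : 'rV[R]_(p + q) :=
  row_mx (rsubmx (lsubmx w)) (rsubmx w).

Arguments Lmap {R n p q}.
Arguments Mmap {R n p q}.

Lemma affm_L (R : realType) n p q : affm (@Lmap R n p q).
Proof. by move=> t x y; rewrite /Lmap !lsub_lin rsub_lin scale_row_mx scale_row_mx add_row_mx. Qed.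
Lemma affm_M (R : realType) n p q : affm (@Mmap R n p q).
Proof. by move=> t x y; rewrite /Mmap !lsub_lin rsub_lin rsub_lin scale_row_mx scale_row_mx add_row_mx. Qed.

Lemma sqdist_lsub (R : realType) n p (x y : 'rV[R]_(n + p)) :
  sqdist (lsubmx x) (lsubmx y) <= sqdist x y.
Proof.
rewrite !sqdistE (_ : lsubmx x - lsubmx y = lsubmx (x - y)); first exact: nrm2_lsub.
by apply/rowP => j; rewrite !mxE.
Qed.
Lemma sqdist_rsub (R : realType) n p (x y : 'rV[R]_(n + p)) :
  sqdist (rsubmx x) (rsubmx y) <= sqdist x y.
Proof.
rewrite !sqdistE (_ : rsubmx x - rsubmx y = rsubmx (x - y)); first exact: nrm2_rsub.
by apply/rowP => j; rewrite !mxE.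
Qed.
Lemma sqdist_L (R : realType) n p q (x y : 'rV[R]_(n + p + q)) :
  sqdist (Lmap x) (Lmap y) <= sqdist x y.
Proof.
rewrite !sqdistE /Lmap opp_row_mx add_row_mx nrm2_row_mx.
rewrite -(hsubmxK (x - y)) nrm2_row_mx.
rewrite (_ : lsubmx (lsubmx x) - lsubmx (lsubmx y) = lsubmx (lsubmx (x - y))); last first.
  by apply/rowP => j; rewrite !mxE.
rewrite (_ : rsubmx x - rsubmx y = rsubmx (x - y)); last by apply/rowP => j; rewrite !mxE.
rewrite lerD2r; exact: nrm2_lsub.
Qed.

Lemma gphE (R : realType) n p (F : 'rV[R]_n -> set 'rV[R]_p) x y :
  gph F (row_mx x y) <-> F x y.
Proof.
split; last by move=> h; exists x, y.
by move=> [x' [y' [h /eq_row_mx [-> ->]]]].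
Qed.

Lemma domE (R : realType) n p (F : 'rV[R]_n -> set 'rV[R]_p) : dom F = lsubmx @` gph F.
Proof.
apply/seteqP; split => x.
  by move=> [y Fy]; exists (row_mx x y); [exact/gphE | rewrite row_mxKl].
by move=> [_ [x' [y [Fy ->]]] <-]; rewrite row_mxKl; exists y.
Qed.

Lemma rgeE (R : realType) n p (F : 'rV[R]_n -> set 'rV[R]_p) : rge F = rsubmx @` gph F.
Proof.
apply/seteqP; split => y.
  by move=> [x Fy]; exists (row_mx x y); [exact/gphE | rewrite row_mxKr].
by move=> [_ [x [y' [Fy ->]]] <-]; rewrite row_mxKr; exists x.
Qed.

Lemma fibE (R : realType) n p (F : 'rV[R]_n -> set 'rV[R]_p) x :
  F x = (fun y => row_mx x y) @^-1` gph F.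
Proof. by apply/seteqP; split => y /=; rewrite /preimage /= gphE. Qed.

Lemma invE (R : realType) p q (G : 'rV[R]_p -> set 'rV[R]_q) z :
  inv_map G z = (fun y => row_mx y z) @^-1` gph G.
Proof. by apply/seteqP; split => y /=; rewrite /preimage /= gphE. Qed.

Lemma Lrow (R : realType) n p q (x : 'rV[R]_n) (y : 'rV[R]_p) (z : 'rV[R]_q) :
  Lmap (row_mx (row_mx x y) z) = row_mx x z.
Proof. by rewrite /Lmap !row_mxKl row_mxKr. Qed.
Lemma Mrow (R : realType) n p q (x : 'rV[R]_n) (y : 'rV[R]_p) (z : 'rV[R]_q) :
  Mmap (row_mx (row_mx x y) z) = row_mx y z.
Proof. by rewrite /Mmap !row_mxKl !row_mxKr. Qed.

Lemma triple (R : realType) n p q (w : 'rV[R]_(n + p + q)) :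
  exists x y z, w = row_mx (row_mx x y) z.
Proof. by exists (lsubmx (lsubmx w)), (rsubmx (lsubmx w)), (rsubmx w); rewrite !hsubmxK. Qed.

Lemma compE (R : realType) n p q (F : 'rV[R]_n -> set 'rV[R]_p) (G : 'rV[R]_p -> set 'rV[R]_q) :
  gph (comp_map G F) = Lmap @` (lsubmx @^-1` gph F `&` Mmap (R:=R) (n:=n) (p:=p) (q:=q) @^-1` gph G).
Proof.
apply/seteqP; split => v.
  move=> [x [z [[y [Fy Gz]] ->]]]; exists (row_mx (row_mx x y) z); last exact: Lrow.
  by split; rewrite /preimage /= ?row_mxKl ?Mrow gphE.
move=> [w [hF hG] <-]; have [x [y [z ew]]] := triple w; subst w.
move: hF hG; rewrite /preimage /= row_mxKl Mrow Lrow !gphE => hF hG.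
by exists y.
Qed.

Lemma convex_inter (R : realType) k (A B : set 'rV[R]_k) :
  convex_set_R A -> convex_set_R B -> convex_set_R (A `&` B).
Proof. by move=> hA hB x y t [Ax Bx] [Ay By] t0 t1; split; [apply: hA | apply: hB]. Qed.

Unset Implicit Arguments.

Theorem theorem3p8 (R : realType) (n p q : nat)
  (F : 'rV[R]_n -> set 'rV[R]_p) (G : 'rV[R]_p -> set 'rV[R]_q) :
  nearly_convex_map F -> nearly_convex_map G ->
  ri (rge F) `&` ri (dom G) !=set0 ->
  ri (gph (comp_map G F)) =
  [set v | exists x z, ri (dom F) x /\ ri (rge G) z /\ v = row_mx x z]
    `&` domM0 F G.
Proof.
move=> [CF [cvF [CFs sCF]]] [CG [cvG [CGs sCG]]] [y0 [hy1 hy2]].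
have hdomF : ri (dom F) = lsubmx @` pro CF.
  by rewrite domE; apply: ri_image => //; [exact: affm_lsub | exact: sqdist_lsub].
have hrgeF : ri (rge F) = rsubmx @` pro CF.
  by rewrite rgeE; apply: ri_image => //; [exact: affm_rsub | exact: sqdist_rsub].
have hdomG : ri (dom G) = lsubmx @` pro CG.
  by rewrite domE; apply: ri_image => //; [exact: affm_lsub | exact: sqdist_lsub].
have hrgeG : ri (rge G) = rsubmx @` pro CG.
  by rewrite rgeE; apply: ri_image => //; [exact: affm_rsub | exact: sqdist_rsub].
have hfibF : forall x y' y, pro CF (row_mx x y') -> (ri (F x) y <-> pro CF (row_mx x y)).
  by move=> x y' y h; rewrite fibE; exact: (ri_fiber y cvF CFs sCF (affm_rowl x) h).
have hfibG : forall z y' y, pro CG (row_mx y' z) -> (ri (inv_map G z) y <-> pro CG (row_mx y z)).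
  by move=> z y' y h; rewrite invE; exact: (ri_fiber y cvG CGs sCG (affm_rowr z) h).
move: hy1 hy2; rewrite hrgeF hdomG => -[w1 pw1 ew1] [w2 pw2 ew2].
set c := row_mx (row_mx (lsubmx w1) y0) (rsubmx w2) : 'rV[R]_(n + p + q).
have pc1 : pro CF (lsubmx c) by rewrite row_mxKl -ew1 hsubmxK.
have pc2 : pro CG (Mmap c) by rewrite Mrow -ew2 hsubmxK.
set PD := lsubmx @^-1` gph F `&` Mmap (R:=R) (n:=n) (p:=p) (q:=q) @^-1` gph G.
set D := lsubmx @^-1` CF `&` Mmap (R:=R) (n:=n) (p:=p) (q:=q) @^-1` CG.
have cvD : convex_set_R D.
  by apply: convex_inter; apply: convex_pre => //; [exact: affm_lsub | exact: affm_M].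
have surjl : forall b : 'rV[R]_(n + p), exists w : 'rV[R]_(n + p + q), lsubmx w = b.
  by move=> b; exists (row_mx b 0); rewrite row_mxKl.
have surjM : forall b : 'rV[R]_(p + q), exists w : 'rV[R]_(n + p + q), Mmap w = b.
  by move=> b; exists (row_mx (row_mx 0 (lsubmx b)) (rsubmx b)); rewrite Mrow hsubmxK.
have pp1 := pro_pre CF (@affm_lsub R (n + p) q) surjl.
have pp2 := pro_pre CG (@affm_M R n p q) surjM.
have pD : pro D = lsubmx @^-1` pro CF `&` Mmap (R:=R) (n:=n) (p:=p) (q:=q) @^-1` pro CG.
  apply/seteqP; split => a.
  - move=> ha; split.
      rewrite -pp1; apply: (pro_inter2 _ _ _ ha).
      + by apply: convex_pre => //; exact: affm_lsub.
      + by rewrite pp1; exact: pc1.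
      + exact: pro_sub pc2.
    rewrite -pp2; rewrite /D setIC in ha; apply: (pro_inter2 _ _ _ ha).
    + by apply: convex_pre => //; exact: affm_M.
    + by rewrite pp2; exact: pc2.
    + exact: pro_sub pc1.
  - move=> [h1 h2]; apply: pro_inter.
    + by apply: convex_pre => //; exact: affm_lsub.
    + by apply: convex_pre => //; exact: affm_M.
    by split; [rewrite pp1; exact: h1 | rewrite pp2; exact: h2].
have pcD : pro D c by rewrite pD.
have hgph : ri (gph (comp_map G F)) = Lmap @` pro D.
  rewrite compE -/PD.
  have -> : ri (Lmap @` PD) = pro (Lmap @` D).
    apply: RIP; first by apply: convex_image => //; exact: affm_L.
      by move=> _ [w [h1 h2] <-]; exists w => //; split; [apply: CFs | apply: CGs].
    move=> _ [w [h1 h2] <-] e e0.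
    have [eps [ep0 [ep1 he]]] := small_eps (nrm2_ge0 (Lmap c - Lmap w)) e0.
    exists (Lmap ((1 - eps) *: w + (1 - (1 - eps)) *: c)); split.
      exists ((1 - eps) *: w + (1 - (1 - eps)) *: c) => //; split.
        rewrite /preimage /= affm_lsub; apply: LSC2 => //; first exact: sCF.
          lra.
        lra.
      rewrite /preimage /= affm_M; apply: LSC2 => //; first exact: sCG.
        lra.
      lra.
    by rewrite /eball /= affm_L sq_comb (_ : 1 - (1 - eps) = eps) //; ring.
  apply/seteqP; split; last exact: pro_image (@affm_L R n p q).
  exact: (pro_image2 cvD (@affm_L R n p q) pcD).
rewrite hgph; apply/seteqP; split => v.
- move=> [w pw <-]; have [x [y [z ew]]] := triple w.
  move: pw; rewrite pD ew /preimage /= row_mxKl Mrow Lrow => -[h1 h2].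
  split.
    exists x, z; split; first by rewrite hdomF; exists (row_mx x y) => //; rewrite row_mxKl.
    by split => //; rewrite hrgeG; exists (row_mx y z) => //; rewrite row_mxKr.
  exists x, z; split => //; exists y; split.
    by rewrite (hfibF x y y h1).
  by rewrite (hfibG z y y h2).
- move=> [[x [z [hx [hz ->]]]] [x' [z' [[y [hFy hGy]] /eq_row_mx [ex ez]]]]].
  subst x' z'.
  move: hx; rewrite hdomF => -[wx pwx ewx].
  move: hz; rewrite hrgeG => -[wz pwz ewz].
  have ax : pro CF (row_mx x (rsubmx wx)) by rewrite -ewx hsubmxK.
  have az : pro CG (row_mx (lsubmx wz) z) by rewrite -ewz hsubmxK.
  move: hFy hGy; rewrite (hfibF x _ y ax) (hfibG z _ y az) => h1 h2.
  exists (row_mx (row_mx x y) z); last exact: Lrow.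
  by rewrite pD /preimage /= row_mxKl Mrow.
Qed.
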